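(* Let $Z$ be a random variable with density $f$, CDF $F$ and $\overline F = 1-F$, satisfying: (a) continuous distribution with bounded density; (b) finite expectation; (c) support unbounded in the $+\infty$ direction; (d) the hazard rate $f(z)/\overline F(z)$ is eventually monotone. Then for every $\lambda>0$, the function $z\mapsto \overline F(z)e^{\lambda z}$ is eventually monotone.
   Context: A function $\phi$ is eventually monotone if there is $z_0\ge 0$ such that $\phi$ is non-decreasing on $(z_0,\infty)$ or non-increasing on $(z_0,\infty)$. *)

(* Defs.v *)
From mathcomp Require Import all_boot all_order all_algebra.
From mathcomp Require Import all_classical all_reals all_analysis.
Set Implicit Arguments. Unset Strict Implicit. Unset Printing Implicit Defensive.
Import Order.TTheory GRing.Theory Num.Theory.
Local Open Scope classical_set_scope.
Local Open Scope ring_scope.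

Definition eventually_monotone (R : realType) (phi : R -> R) : Prop :=
  exists z0 : R, 0 <= z0 /\
    ((forall x y, z0 < x -> x <= y -> phi x <= phi y) \/
     (forall x y, z0 < x -> x <= y -> phi y <= phi x)).

Definition cdf (R : realType) (f : R -> R) (z : R) : R :=
  fine (\int[lebesgue_measure]_(x in `]-oo, z]) (f x)%:E)%E.

Definition survival (R : realType) (f : R -> R) (z : R) : R := 1 - cdf f z.

Definition hazard (R : realType) (f : R -> R) (z : R) : R := f z / survival f z.

(* Main.v *)
Require Import Defs.
From mathcomp Require Import all_boot all_order all_algebra.
From mathcomp Require Import all_classical all_reals all_analysis.
From mathcomp Require Import measurable_realfun.
From mathcomp Require Import ring lra.
Import Order.TTheory GRing.Theory Num.Theory.
Local Open Scope classical_set_scope.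
Local Open Scope ring_scope.

Set Implicit Arguments. Unset Strict Implicit.

Section G.
Variable R : realType.

Lemma bernoulli (a : R) n : 0 <= a <= 1 -> 1 - n%:R * a <= (1 - a) ^+ n.
Proof.
move=> /andP[a0 a1]; elim: n => [|n IH]; first by rewrite mul0r subr0 expr0.
rewrite exprS -natr1.
have h : 0 <= 1 - a by lra.
have := ler_wpM2l h IH.
have : 0 <= n%:R :> R by exact: ler0n.
nra.
Qed.

Lemma pow_lb (q p u : R) n : 0 <= q -> 0 <= u <= 1 -> q * (1 - u ^+ 2) <= p ->
  q ^+ n * (1 - n%:R * u ^+ 2) <= p ^+ n.
Proof.
move=> q0 /andP[u0 u1] qp.
have u2 : 0 <= u ^+ 2 <= 1 by apply/andP; split; nra.
have h1 : 0 <= q * (1 - u ^+ 2) by apply: mulr_ge0 => //; nra.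
have h2 := lerXn2r n (x := q * (1 - u ^+ 2)) (y := p).
rewrite !nnegrE in h2; apply: le_trans (h2 h1 (le_trans h1 qp) qp).
rewrite exprMn; apply: ler_wpM2l; first exact: exprn_ge0.
exact: bernoulli.
Qed.

Lemma arch_lim (A B C K : R) : 0 <= B -> 0 <= K ->
  (forall n : nat, K < n%:R -> A - B / n%:R <= C) -> A <= C.
Proof.
move=> B0 K0 H; rewrite leNgt; apply/negP => CA.
have d0 : 0 < A - C by lra.
set n := (Num.truncn (K + B / (A - C))).+1.
have hn : K + B / (A - C) < n%:R by exact: Num.Theory.truncnS_gt.
have hB : 0 <= B / (A - C) by apply: divr_ge0 => //; exact: ltW.
have n0 : 0 < n%:R :> R by lra.
have Kn : K < n%:R by lra.
have := H n Kn.
have : B < n%:R * (A - C).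
  by rewrite -ltr_pdivrMr //; lra.
move=> h1 h2.
have : B / n%:R < A - C by rewrite ltr_pdivrMr // mulrC.
lra.
Qed.

Lemma iterD (S : R -> R) (x lam : R) : 0 <= lam -> (forall z, 0 <= S z) ->
  (forall a b, x <= a -> a <= b -> S b * (1 + lam * (b - a)) <= S a) ->
  forall y, x <= y -> S y * expR (lam * y) <= S x * expR (lam * x).
Proof.
move=> l0 S0 step y xy.
set c := lam * (y - x).
have c0 : 0 <= c by apply: mulr_ge0 => //; lra.
have -> : lam * y = lam * x + c by rewrite /c; ring.
rewrite expRD (mulrC (expR (lam * x))) mulrA ler_wpM2r ?expR_ge0 //.
apply: (@arch_lim (S y * expR c) (S y * expR c * c ^+ 2) (S x) c) => //.
  by apply: mulr_ge0; [apply: mulr_ge0; [exact: S0|exact: expR_ge0]|exact: sqr_ge0].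
move=> n cn.
have n0 : 0 < n%:R :> R by lra.
set d := (y - x) / n%:R.
have d0 : 0 <= d by apply: divr_ge0; lra.
set u := lam * d.
have uc : u = c / n%:R by rewrite /u /d /c mulrA.
have u0 : 0 <= u by apply: mulr_ge0.
have u1 : u <= 1 by rewrite uc ler_pdivrMr // mul1r ltW.
have it : forall k : nat, S (x + k%:R * d) * (1 + u) ^+ k <= S x.
  elim=> [|k IH]; first by rewrite mul0r addr0 expr0 mulr1.
  apply: le_trans IH; rewrite exprS mulrA.
  apply: ler_wpM2r; first by apply: exprn_ge0; lra.
  have := step (x + k%:R * d) (x + k.+1%:R * d).
  have -> : x + k.+1%:R * d - (x + k%:R * d) = d by rewrite -natr1; ring.
  apply.
    by rewrite lerDl; apply: mulr_ge0.
  by rewrite lerD2l ler_wpM2r // ler_nat.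
have yn : x + n%:R * d = y by rewrite /d mulrC mulfVK; [ring|lra].
have := it n; rewrite yn => hy.
have E1 : expR u * (1 - u ^+ 2) <= 1 + u.
  have := expR_ge1Dx (- u); rewrite expRN => h.
  have eu := expR_gt0 u.
  have : expR u * (1 - u) <= 1.
    by rewrite -ler_pdivlMl // mulrC div1r.
  nra.
have P := @pow_lb (expR u) (1 + u) u n (expR_ge0 u) (introT andP (conj u0 u1)) E1.
rewrite -expRM_natl in P.
have e : n%:R * u = c by rewrite uc mulrC mulfVK //; lra.
rewrite e in P.
have Sy0 := S0 y.
have : S y * (expR c * (1 - n%:R * u ^+ 2)) <= S y * (1 + u) ^+ n.
  by apply: ler_wpM2l.
have -> : n%:R * u ^+ 2 = c ^+ 2 / n%:R.
  by rewrite uc; field; lra.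
move=> h2.
have : S y * expR c - S y * expR c * c ^+ 2 / n%:R = S y * (expR c * (1 - c ^+ 2 / n%:R)).
  by field; lra.
lra.
Qed.

Lemma iterI (S : R -> R) (x lam : R) : 0 <= lam -> (forall z, 0 <= S z) ->
  (forall a b, x <= a -> a <= b -> S a * (1 - lam * (b - a)) <= S b) ->
  forall y, x <= y -> S x * expR (lam * x) <= S y * expR (lam * y).
Proof.
move=> l0 S0 step y xy.
set c := lam * (y - x).
have c0 : 0 <= c by apply: mulr_ge0 => //; lra.
have -> : lam * y = lam * x + c by rewrite /c; ring.
rewrite expRD (mulrC (expR (lam * x))) mulrA ler_wpM2r ?expR_ge0 //.
apply: (@arch_lim (S x) (S x * c ^+ 2) (S y * expR c) c) => //.
  by apply: mulr_ge0; [exact: S0|exact: sqr_ge0].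
move=> n cn.
have n0 : 0 < n%:R :> R by lra.
set d := (y - x) / n%:R.
have d0 : 0 <= d by apply: divr_ge0; lra.
set u := lam * d.
have uc : u = c / n%:R by rewrite /u /d /c mulrA.
have u0 : 0 <= u by apply: mulr_ge0.
have u1 : u <= 1 by rewrite uc ler_pdivrMr // mul1r ltW.
have it : forall k : nat, S x * (1 - u) ^+ k <= S (x + k%:R * d).
  elim=> [|k IH]; first by rewrite mul0r addr0 expr0 mulr1.
  rewrite exprSr mulrA.
  have h1 : 0 <= 1 - u by lra.
  apply: le_trans (ler_wpM2r h1 IH) _.
  have := step (x + k%:R * d) (x + k.+1%:R * d).
  have -> : x + k.+1%:R * d - (x + k%:R * d) = d by rewrite -natr1; ring.
  apply.
    by rewrite lerDl; apply: mulr_ge0.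
  by rewrite lerD2l ler_wpM2r // ler_nat.
have yn : x + n%:R * d = y by rewrite /d mulrC mulfVK; [ring|lra].
have := it n; rewrite yn => hy.
have E1 : expR (- u) * (1 - u ^+ 2) <= 1 - u.
  have := expR_ge1Dx u => h.
  have eu := expR_gt0 (- u).
  have : expR (- u) * (1 + u) <= 1.
    by rewrite expRN mulrC ler_pdivrMr ?expR_gt0 // mul1r.
  nra.
have P := @pow_lb (expR (- u)) (1 - u) u n (expR_ge0 _) (introT andP (conj u0 u1)) E1.
rewrite -expRM_natl in P.
have e : n%:R * - u = - c by rewrite mulrN uc mulrC mulfVK //; lra.
rewrite e in P.
have Sx0 := S0 x.
have : S x * (expR (- c) * (1 - n%:R * u ^+ 2)) <= S x * (1 - u) ^+ n.
  by apply: ler_wpM2l.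
have -> : n%:R * u ^+ 2 = c ^+ 2 / n%:R.
  by rewrite uc; field; lra.
move=> h2.
have ec : expR (- c) * expR c = 1 by rewrite mulrC expRxMexpNx_1.
have ec0 := expR_gt0 c.
have : S x - S x * c ^+ 2 / n%:R = S x * (expR (- c) * (1 - c ^+ 2 / n%:R)) * expR c.
  have eq1 : S x * (expR (- c) * (1 - c ^+ 2 / n%:R)) * expR c =
     S x * (1 - c ^+ 2 / n%:R) * (expR (- c) * expR c) by ring.
  by rewrite eq1 ec mulr1; field; lra.
move=> ->.
rewrite ler_wpM2r ?expR_ge0 //; exact: le_trans h2 hy.
Qed.
End G.

Section S.
Variables (R : realType) (f : R -> R).
Hypothesis f_meas : measurable_fun setT f.
Hypothesis f_ge0 : forall x, 0 <= f x.
Hypothesis f_int1 : (\int[lebesgue_measure]_x (f x)%:E = 1)%E.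

Local Notation mu := (@lebesgue_measure R).

Lemma int_le1 (A : set R) : measurable A ->
  (\int[mu]_(x in A) (f x)%:E <= 1)%E.
Proof.
move=> mA; rewrite -f_int1; apply: ge0_subset_integral => //.
- exact/measurable_EFinP.
- by move=> x _; rewrite lee_fin.
Qed.

Lemma int_ge0 (A : set R) : (0 <= \int[mu]_(x in A) (f x)%:E)%E.
Proof. by apply: integral_ge0 => x _; rewrite lee_fin. Qed.

Lemma int_fin (A : set R) : measurable A ->
  (\int[mu]_(x in A) (f x)%:E)%E = (fine (\int[mu]_(x in A) (f x)%:E))%:E.
Proof.
move=> mA; rewrite fineK// ge0_fin_numE ?int_ge0//.
exact: (le_lt_trans (int_le1 mA) (ltry 1%R)).
Qed.

Lemma cdf_split a b : a <= b ->
  Defs.cdf f b - Defs.cdf f a = fine (\int[mu]_(x in `]a, b]) (f x)%:E)%E.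
Proof.
move=> ab; rewrite /Defs.cdf.
have -> : `]-oo, b]%classic = `]-oo, a]%classic `|` `]a, b]%classic :> set R.
  by rewrite -itv_bndbnd_setU// bnd_simp.
rewrite ge0_integral_setU//=.
- rewrite (int_fin (measurable_itv _)) (int_fin (measurable_itv `]a, b])) /=.
  by rewrite addrAC subrr add0r.
- exact/measurable_EFinP/measurable_funTS.
- by move=> x _; rewrite lee_fin.
- rewrite /disj_set; apply/eqP; rewrite -subset0 => x [] /=; rewrite !in_itv /= => xa /andP[ax _].
  by move: (lt_le_trans ax xa); rewrite ltxx.
Qed.

Lemma int_cst_itv a b c : a <= b ->
  (\int[mu]_(x in `]a, b]) c%:E = (c * (b - a))%:E)%E.
Proof.
move=> ab; rewrite (@integral_cst _ _ _ mu _ (measurable_itv `]a, b]) c%:E).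
have /= := lebesgue_measure_itv `]a, b]. rewrite lte_fin => ->.

have [ab'|ba] := ltP a b; first by rewrite -EFinD -EFinM.
have -> : b = a by apply/le_anti; rewrite ba ab.
by rewrite subrr mulr0 mule0.
Qed.

Lemma int_lb a b c : a <= b -> 0 <= c -> (forall t, a < t -> t <= b -> c <= f t) ->
  c * (b - a) <= fine (\int[mu]_(x in `]a, b]) (f x)%:E)%E.
Proof.
move=> ab c0 H; rewrite -lee_fin -int_fin; last exact: measurable_itv.
rewrite -int_cst_itv //; apply: ge0_le_integral => //.
all: try by move=> x _; rewrite lee_fin.
all: try exact: measurable_cst.
all: try exact/measurable_EFinP/measurable_funTS.
all: try by move=> x /=; rewrite in_itv /= => /andP[h1 h2]; rewrite lee_fin H.
Qed.

Lemma int_ub a b c : a <= b -> (forall t, a < t -> t <= b -> f t <= c) ->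
  fine (\int[mu]_(x in `]a, b]) (f x)%:E)%E <= c * (b - a).
Proof.
move=> ab H; rewrite -lee_fin -int_fin; last exact: measurable_itv.
rewrite -int_cst_itv //; apply: ge0_le_integral => //.
all: try by move=> x _; rewrite lee_fin.
all: try exact: measurable_cst.
all: try exact/measurable_EFinP/measurable_funTS.
all: try by move=> x /=; rewrite in_itv /= => /andP[h1 h2]; rewrite lee_fin H.
Qed.

Lemma S_split a b : a <= b ->
  survival f a - survival f b = fine (\int[mu]_(x in `]a, b]) (f x)%:E)%E.
Proof. by move=> ab; rewrite -cdf_split // /survival; ring. Qed.

Lemma fine_I_ge0 a b : 0 <= fine (\int[mu]_(x in `]a, b]) (f x)%:E)%E.
Proof. by rewrite -lee_fin -int_fin ?int_ge0 //; exact: measurable_itv. Qed.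

Lemma S_anti a b : a <= b -> survival f b <= survival f a.
Proof. by move=> ab; rewrite -subr_ge0 S_split // fine_I_ge0. Qed.

Hypothesis S_gt0 : forall z, 0 < survival f z.

Lemma stepD lam a b : a <= b -> 0 <= lam ->
  (forall t, a < t -> t <= b -> lam * survival f t <= f t) ->
  survival f b * (1 + lam * (b - a)) <= survival f a.
Proof.
move=> ab l0 H.
have h : lam * survival f b * (b - a) <= survival f a - survival f b.
  rewrite S_split //; apply: int_lb => //; first exact: mulr_ge0 l0 (ltW (S_gt0 b)).
  move=> t ta tb; apply: le_trans (H t ta tb).
  by rewrite ler_wpM2l // S_anti.
nra.
Qed.

Lemma stepI lam a b : a <= b -> 0 <= lam ->
  (forall t, a < t -> t <= b -> f t <= lam * survival f t) ->
  survival f a * (1 - lam * (b - a)) <= survival f b.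
Proof.
move=> ab l0 H.
have h : survival f a - survival f b <= lam * survival f a * (b - a).
  rewrite S_split //; apply: int_ub => //.
  move=> t ta tb; apply: le_trans (H t ta tb) _.
  by rewrite ler_wpM2l // S_anti // ltW.
nra.
Qed.

Lemma monoD x lam : 0 <= lam -> (forall t, x < t -> lam * survival f t <= f t) ->
  forall y, x <= y -> survival f y * expR (lam * y) <= survival f x * expR (lam * x).
Proof.
move=> l0 H; apply: iterD => //; first by move=> z; exact: ltW.
move=> a b xa ab; apply: stepD => // t ta tb; apply: H.
exact: le_lt_trans ta.
Qed.

Lemma monoI x lam : 0 <= lam -> (forall t, x < t -> f t <= lam * survival f t) ->
  forall y, x <= y -> survival f x * expR (lam * x) <= survival f y * expR (lam * y).
Proof.
move=> l0 H; apply: iterI => //; first by move=> z; exact: ltW.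
move=> a b xa ab; apply: stepI => // t ta tb; apply: H.
exact: le_lt_trans ta.
Qed.
End S.

Unset Implicit Arguments.
Set Strict Implicit.

Theorem lemma6 (R : realType) (f : R -> R)
  (* f is a probability density on R *)
  (f_meas : measurable_fun setT f)
  (f_ge0 : forall x, 0 <= f x)
  (f_int1 : (\int[lebesgue_measure]_x (f x)%:E = 1)%E)
  (* (a) bounded density *)
  (f_bdd : exists M : R, forall x, f x <= M)
  (* (b) finite expectation *)
  (f_mean : lebesgue_measure.-integrable setT (fun x => (x * f x)%:E))
  (* (c) support unbounded towards +oo *)
  (f_unbdd : forall z : R, 0 < survival f z)
  (* (d) hazard rate eventually monotone *)
  (f_haz : eventually_monotone (hazard f)) :
  forall lam : R, 0 < lam ->
    eventually_monotone (fun z => survival f z * expR (lam * z)).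
Proof.
move=> lam l0.
have l0' := ltW l0.
have mD := monoD f_meas f_ge0 f_int1 f_unbdd l0'.
have mI := monoI f_meas f_ge0 f_int1 f_unbdd l0'.
have hge : forall t, (lam <= hazard f t) = (lam * survival f t <= f t).
  by move=> t; rewrite /hazard ler_pdivlMr.
have hle : forall t, (hazard f t <= lam) = (f t <= lam * survival f t).
  by move=> t; rewrite /hazard ler_pdivrMr // mulrC.
case: f_haz => z0 [z00 [Hinc|Hdec]].
- case: (pselect (exists z1, z0 < z1 /\ lam <= hazard f z1)) => [[z1 [z01 hz1]]|N].
  + exists z1; split; first exact: (le_trans z00 (ltW z01)).
    right => x y z1x xy /=; apply: (mD x) => // t xt.
    rewrite -hge; apply: (le_trans hz1); apply: Hinc => //.
    by apply: ltW; apply: (lt_trans z1x xt).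
  + exists z0; split => //; left => x y z0x xy /=; apply: (mI x) => // t xt.
    rewrite -hle; rewrite leNgt; apply/negP => ht; apply: N; exists t; split.
      exact: lt_trans z0x xt.
    exact: ltW.
- case: (pselect (exists z1, z0 < z1 /\ hazard f z1 <= lam)) => [[z1 [z01 hz1]]|N].
  + exists z1; split; first exact: (le_trans z00 (ltW z01)).
    left => x y z1x xy /=; apply: (mI x) => // t xt.
    rewrite -hle; apply: le_trans hz1; apply: Hdec => //.
    by apply: ltW; apply: (lt_trans z1x xt).
  + exists z0; split => //; right => x y z0x xy /=; apply: (mD x) => // t xt.
    rewrite -hge; rewrite leNgt; apply/negP => ht; apply: N; exists t; split.
      exact: lt_trans z0x xt.
    exact: ltW.
Qed.
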